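(* Let $G$ and $H$ be graphs. If there is a non-trivial graph $K$ such that $K\mid G$ and $K\mid H$, then $G$ and $H$ are not weakly disjoint.
   Context: A weight function on finite $U$ is $\alpha:U\times U\to\mathbb{R}$, $\alpha\ge0$, symmetric, summing to $1$; degree $p(u)=\sum_{u'}\alpha(u,u')$; a graph is $(U,\alpha)$; it is non-trivial if at least two vertices have positive degree. For graphs $G=(U,\alpha)$, $H=(V,\beta)$ with degrees $p,q$, $H\mid G$ means there is a surjective $\phi:U\to V$ with (i) $q(v)=\sum_{u\in\phi^{-1}(v)}p(u)$ for all $v$, and (ii) $q(v)\sum_{u'\in\phi^{-1}(v')}\alpha(u,u')=p(u)\beta(v,v')$ for all $v,v'$, $u\in\phi^{-1}(v)$. A weight joining of $\alpha,\beta$ is a weight function $\gamma$ on $U\times V$ with degree $r(u,v)=\sum_{(u',v')}\gamma((u,v),(u',v'))$ such that $\sum_v r(u,v)=p(u)$, $\sum_u r(u,v)=q(v)$, $p(u)\sum_{\tilde v}\gamma((u,v),(u',\tilde v))=\alpha(u,u')r(u,v)$ and $q(v)\sum_{\tilde u}\gamma((u,v),(\tilde u,v'))=\beta(v,v')r(u,v)$. $G,H$ are weakly disjoint if every weight joining has degree $r(u,v)=p(u)q(v)$. *)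

(* Defs.v *)
From mathcomp Require Import all_boot all_order all_algebra.
From mathcomp Require Import reals.
Set Implicit Arguments. Unset Strict Implicit. Unset Printing Implicit Defensive.
Import Order.TTheory GRing.Theory Num.Theory.
Local Open Scope ring_scope.

Section GraphDefs.
Variable R : realType.

Definition weight_fun (U : finType) (a : U -> U -> R) : Prop :=
  [/\ forall u u', 0 <= a u u',
      forall u u', a u u' = a u' u
    & \sum_(u : U) \sum_(u' : U) a u u' = 1].

Record graph := Graph {
  gvert : finType;
  gweight : gvert -> gvert -> R;
  gweightP : weight_fun gweight }.

Definition degree (U : finType) (a : U -> U -> R) (u : U) : R :=
  \sum_(u' : U) a u u'.

Definition gdeg (G : graph) : gvert G -> R := degree (@gweight G).

Definition nontrivial (G : graph) : Prop :=
  exists u1 u2 : gvert G, [/\ u1 != u2, 0 < gdeg u1 & 0 < gdeg u2].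

Definition gdivides (H G : graph) : Prop :=
  exists phi : gvert G -> gvert H,
    [/\ (forall v : gvert H, exists u : gvert G, phi u = v),
        (forall v : gvert H, gdeg v = \sum_(u : gvert G | phi u == v) gdeg u)
      & (forall (v v' : gvert H) (u : gvert G), phi u = v ->
           gdeg v * (\sum_(u' : gvert G | phi u' == v') gweight u u')
           = gdeg u * gweight v v')].

Definition weight_joining (G H : graph)
    (c : (gvert G * gvert H) -> (gvert G * gvert H) -> R) : Prop :=
  let p := @gdeg G in let q := @gdeg H in
  let a := @gweight G in let b := @gweight H in
  let r := degree c in
  [/\ weight_fun c,
      (forall u, \sum_(v : gvert H) r (u, v) = p u),
      (forall v, \sum_(u : gvert G) r (u, v) = q v),
      (forall u v u', p u * (\sum_(v2 : gvert H) c (u, v) (u', v2))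
                      = a u u' * r (u, v))
    & (forall u v v', q v * (\sum_(u2 : gvert G) c (u, v) (u2, v'))
                      = b v v' * r (u, v))].

Definition weakly_disjoint (G H : graph) : Prop :=
  forall c : (gvert G * gvert H) -> (gvert G * gvert H) -> R,
    @weight_joining G H c ->
    forall (u : gvert G) (v : gvert H), degree c (u, v) = @gdeg G u * @gdeg H v.

End GraphDefs.

(* Main.v *)
Require Import Defs.
From mathcomp Require Import all_boot all_order all_algebra.
From mathcomp Require Import reals.
From mathcomp Require Import ring.
Set Implicit Arguments. Unset Strict Implicit. Unset Printing Implicit Defensive.
Import Order.TTheory GRing.Theory Num.Theory.
Local Open Scope ring_scope.

Lemma w_ge0 (R : realType) (G : graph R) (u u' : gvert G) : 0 <= gweight u u'.
Proof. by case: (gweightP G) => h _ _; apply: h. Qed.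

Lemma w_sym (R : realType) (G : graph R) (u u' : gvert G) : gweight u u' = gweight u' u.
Proof. by case: (gweightP G) => _ h _; apply: h. Qed.

Lemma w_sum (R : realType) (G : graph R) : \sum_(u : gvert G) gdeg u = 1.
Proof. by case: (gweightP G). Qed.

Lemma deg_ge0 (R : realType) (G : graph R) (u : gvert G) : 0 <= gdeg u.
Proof. by rewrite /gdeg /degree; apply: sumr_ge0 => *; apply: w_ge0. Qed.

Lemma row0 (R : realType) (G : graph R) (u u' : gvert G) :
  gdeg u = 0 -> gweight u u' = 0.
Proof.
move=> h; apply: (psumr_eq0P (P := xpredT) (F := fun x => gweight u x)) => //.
by move=> *; apply: w_ge0.
Qed.

Section Div.
Variables (R : realType) (G K : graph R) (phi : gvert G -> gvert K).
Hypothesis Hi : forall v : gvert K, gdeg v = \sum_(u : gvert G | phi u == v) gdeg u.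
Hypothesis Hiii : forall (v v' : gvert K) (u : gvert G), phi u = v ->
           gdeg v * (\sum_(u' : gvert G | phi u' == v') gweight u u')
           = gdeg u * gweight v v'.

Lemma p0 (u : gvert G) : gdeg (phi u) = 0 -> gdeg u = 0.
Proof.
move=> h; have := Hi (phi u); rewrite h => /esym /psumr_eq0P; apply => //.
by move=> *; apply: deg_ge0.
Qed.

Lemma a0 (u u' : gvert G) : gweight (phi u) (phi u') = 0 -> gweight u u' = 0.
Proof.
move=> h; have := Hiii (phi u') (erefl (phi u)); rewrite h mulr0 => /eqP.
rewrite mulf_eq0 => /orP [/eqP k0 | /eqP s0].
  by apply: row0; apply: p0.
apply: (psumr_eq0P _ s0) => //; by move=> *; apply: w_ge0.
Qed.

Lemma Lq (u : gvert G) w' :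
  (\sum_(u' | phi u' == w') gweight u u') / gweight (phi u) w'
  = if gweight (phi u) w' == 0 then 0 else gdeg u / gdeg (phi u).
Proof.
case: eqP => [->|kn]; first by rewrite invr0 mulr0.
case: (eqVneq (gdeg (phi u)) 0) => k0.
  rewrite big1 ?mul0r ?(p0 k0) ?mul0r // => u' _; apply: row0; exact: p0.
have e := Hiii w' (erefl (phi u)).
have -> : \sum_(u' | phi u' == w') gweight u u' = gdeg u * gweight (phi u) w' / gdeg (phi u).
  by rewrite -e; field.
by field; apply/andP; split => //; apply/eqP.
Qed.
End Div.

Section Main.
Variables (R : realType) (G H K : graph R) (phi : gvert G -> gvert K) (psi : gvert H -> gvert K).

Definition jc (x y : gvert G * gvert H) : R :=
  if (phi x.1 == psi x.2) && (phi y.1 == psi y.2) then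
    gweight x.1 y.1 * gweight x.2 y.2 / gweight (phi x.1) (phi y.1)
  else 0.

Hypothesis HiG : forall v : gvert K, gdeg v = \sum_(u : gvert G | phi u == v) gdeg u.
Hypothesis HiiiG : forall (v v' : gvert K) (u : gvert G), phi u = v ->
           gdeg v * (\sum_(u' : gvert G | phi u' == v') gweight u u')
           = gdeg u * gweight v v'.
Hypothesis HiH : forall v : gvert K, gdeg v = \sum_(u : gvert H | psi u == v) gdeg u.
Hypothesis HiiiH : forall (v v' : gvert K) (u : gvert H), psi u = v ->
           gdeg v * (\sum_(u' : gvert H | psi u' == v') gweight u u')
           = gdeg u * gweight v v'.

Lemma rowH u v u' : phi u = psi v ->
  \sum_(v2 : gvert H) jc (u, v) (u', v2) = gweight u u' * (gdeg v / gdeg (psi v)).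
Proof.
move=> e; rewrite /jc /= e eqxx /=.
rewrite -big_mkcond /=.
under eq_bigl => v2 do rewrite eq_sym.
rewrite -mulr_suml -mulr_sumr -mulrA (Lq HiH HiiiH).
case: eqP => [k0|]; last by [].
by rewrite -e in k0; rewrite (a0 HiG HiiiG k0) !mul0r.
Qed.

Lemma rowG u v v' : phi u = psi v ->
  \sum_(u2 : gvert G) jc (u, v) (u2, v') = gweight v v' * (gdeg u / gdeg (phi u)).
Proof.
move=> e; rewrite /jc /=; have -> : phi u == psi v by apply/eqP.
rewrite -big_mkcond /=.
under eq_bigr => u2 /eqP -> do rewrite mulrAC mulrC.
rewrite -mulr_sumr -mulr_suml (Lq HiG HiiiG).
case: eqP => [k0|]; last by [].
by rewrite e in k0; rewrite (a0 HiH HiiiH k0) !mul0r.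
Qed.

Lemma degjc u v : degree jc (u, v) =
  if phi u == psi v then gdeg u * gdeg v / gdeg (phi u) else 0.
Proof.
rewrite /degree -(pair_bigA _ (fun u' v' => jc (u, v) (u', v'))) /=.
case: eqP => e.
  under eq_bigr => u' _ do rewrite rowH //.
  by rewrite -mulr_suml e mulrA.
by apply: big1 => u' _; apply: big1 => v' _; by rewrite /jc /= (introF eqP e).
Qed.

Lemma jc_join : weight_joining jc.
Proof.
have m1 : forall u, \sum_(v : gvert H) degree jc (u, v) = gdeg u.
  move=> u; under eq_bigr => v _ do rewrite degjc.
  rewrite -big_mkcond /=.
  under eq_bigr => v _ do rewrite mulrAC.
  rewrite -mulr_sumr.
  under eq_bigl => v do rewrite eq_sym.
  rewrite -HiH.
  case: (eqVneq (gdeg (phi u)) 0) => k0; first by rewrite (p0 HiG k0) !mul0r.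
  by field.
split.
- split.
  + move=> x y; rewrite /jc; case: ifP => // _.
    by apply: divr_ge0; [apply: mulr_ge0|]; apply: w_ge0.
  + move=> x y; rewrite /jc andbC; case: ifP => // _.
    by rewrite (w_sym x.1) (w_sym x.2) (w_sym (phi x.1)).
  + rewrite -(pair_bigA _ (fun u v => \sum_y jc (u, v) y)) /=.
    under eq_bigr => u _ do rewrite m1.
    exact: w_sum.
- exact: m1.
- move=> v; under eq_bigr => u _ do rewrite degjc.
  rewrite -big_mkcond /=.
  under eq_bigr => u /eqP -> do rewrite -mulrA mulrC.
  rewrite -mulr_sumr -HiG.
  case: (eqVneq (gdeg (psi v)) 0) => k0; first by rewrite (p0 HiH k0) !mul0r.
  by field.
- move=> u v u'; rewrite degjc; case: eqP => e.
    by rewrite rowH //= e; ring.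
  rewrite mulr0 big1 ?mulr0 // => v2 _; by rewrite /jc /= (introF eqP e).
- move=> u v v'; rewrite degjc; case: eqP => e.
    by rewrite rowG //=; ring.
  rewrite mulr0 big1 ?mulr0 // => u2 _; by rewrite /jc /= (introF eqP e).
Qed.

End Main.

Lemma exists_pos (R : realType) (T : finType) (P : pred T) (F : T -> R) :
  0 < \sum_(i | P i) F i -> exists i, P i && (F i != 0).
Proof.
move=> h; apply/existsP; apply: contraLR h => /existsPn h.
rewrite big1 ?ltxx // => i Pi; have := h i; rewrite Pi /= => /negbNE /eqP.
exact.
Qed.

Theorem proposition4p7 (R : realType) (G H : graph R) :
  (exists K : graph R, [/\ nontrivial K, gdivides K G & gdivides K H]) ->
  ~ weakly_disjoint G H.
Proof.
move=> [K [[w1 [w2 [ne k1 k2]]] [phi [_ HiG HiiiG]] [psi [_ HiH HiiiH]]]] wd.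
have := k1; rewrite HiG => /exists_pos [u /andP [/eqP pu nu]].
have := k2; rewrite HiH => /exists_pos [v /andP [/eqP qv nv]].
have := wd _ (jc_join HiG HiiiG HiH HiiiH) u v.
rewrite (degjc HiG HiiiG HiH HiiiH) pu qv (negbTE ne) => /esym /eqP.
by rewrite mulf_eq0 (negbTE nu) (negbTE nv).
Qed.
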